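(* Let $W,V$ be subspaces of $\mathbb{R}^n$ with $\mathbb{R}^n=W\oplus V^\perp$, and let $\mu\in\mathcal{P}_2(W)$ be a probabilistic frame for $W$ with frame operator $\mathbf{S}_\mu$. A measurable map $T:W\to V$ is such that $T_\#\mu$ is an oblique dual probabilistic frame of $\mu$ on $V$ with respect to the coupling $(\mathbf{Id},T)_\#\mu$ (i.e. $T_\#\mu\in\mathcal{P}_2(V)$ and $\int_W\mathbf{x}\,T(\mathbf{x})^t\,d\mu(\mathbf{x})=\boldsymbol{\pi}_{WV^\perp}$) if and only if there is a measurable map $h:W\to V$ with $h_\#\mu\in\mathcal{P}_2(V)$ such that for all $\mathbf{x}\in W$, $$T(\mathbf{x})=\boldsymbol{\pi}_{VW^\perp}\mathbf{S}_\mu^\dagger\mathbf{x}+h(\mathbf{x})-\int_W\langle\mathbf{S}_\mu^\dagger\mathbf{x},\mathbf{y}\rangle\,h(\mathbf{y})\,d\mu(\mathbf{y}).$$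
   Context: $\mathcal{P}_2(S)$ denotes Borel probability measures on $\mathbb{R}^n$ concentrated on the subspace $S$ with finite second moment. $\mu\in\mathcal{P}_2(W)$ is a probabilistic frame for $W$ if there exist $0<A\le B<\infty$ with $A\|\mathbf{x}\|^2\le\int_W|\langle\mathbf{x},\mathbf{y}\rangle|^2d\mu(\mathbf{y})\le B\|\mathbf{x}\|^2$ for all $\mathbf{x}\in W$; its frame operator is $\mathbf{S}_\mu=\int_W\mathbf{y}\mathbf{y}^td\mu(\mathbf{y})$, and $\mathbf{S}_\mu^\dagger$ is its Moore–Penrose inverse. $T_\#\mu(E)=\mu(T^{-1}(E))$ and $(\mathbf{Id},T)_\#\mu$ is the pushforward of $\mu$ under $\mathbf{x}\mapsto(\mathbf{x},T(\mathbf{x}))$. $\boldsymbol{\pi}_{WV^\perp}$ is the oblique projection onto $W$ along $V^\perp$, and $\boldsymbol{\pi}_{VW^\perp}$ the oblique projection onto $V$ along $W^\perp$. $\nu\in\mathcal{P}_2(V)$ is an oblique dual probabilistic frame of $\mu$ on $V$ with respect to a coupling $\gamma$ of $\mu$ and $\nu$ if $\int_{W\times V}\mathbf{x}\mathbf{y}^t\,d\gamma(\mathbf{x},\mathbf{y})=\boldsymbol{\pi}_{WV^\perp}$. *)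

(* Defs.v *)
(* Points of R^n are row vectors
   'rV[R]_n; subspaces of R^n are row spaces of square matrices (mxalgebra).
   Matrices acting on vectors follow the paper's column convention via
   [colapp]. *)
From HB Require Import structures.
From mathcomp Require Import all_boot all_order all_algebra.
From mathcomp Require Import all_classical all_reals all_analysis.
Set Implicit Arguments. Unset Strict Implicit. Unset Printing Implicit Defensive.
Import Order.TTheory GRing.Theory Num.Theory.
Import numFieldNormedType.Exports.
Local Open Scope classical_set_scope.
Local Open Scope ring_scope.

Definition Rn (R : realType) (n : nat) := g_sigma_algebraType (@open 'rV[R]_n).

Definition vec (R : realType) (n : nat) (x : Rn R n) : 'rV[R]_n := x.

Definition dot (R : realType) (n : nat) (x y : 'rV[R]_n) : R :=
  \sum_(i < n) x 0 i * y 0 i.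
Definition sqnorm (R : realType) (n : nat) (x : 'rV[R]_n) : R := dot x x.

Definition inS (R : realType) (n : nat) (S : 'M[R]_n) : set (Rn R n) :=
  [set x | (vec x <= S)%MS].

Definition orthc (R : realType) (n : nat) (S : 'M[R]_n) : 'M[R]_n :=
  kermx S^T.

(* oblique projection onto W along V^perp, as a matrix acting on column
   vectors (pi_{W V^perp}) *)
Definition oproj (R : realType) (n : nat) (W V : 'M[R]_n) : 'M[R]_n :=
  (proj_mx W (orthc V))^T.

Definition colapp (R : realType) (n : nat) (M : 'M[R]_n) (x : 'rV[R]_n)
  : 'rV[R]_n := (M *m x^T)^T.

Definition penrose (R : realType) (n : nat) (A B : 'M[R]_n) : Prop :=
  [/\ A *m B *m A = A, B *m A *m B = B, (A *m B)^T = A *m B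
    & (B *m A)^T = B *m A].
Definition mpinv (R : realType) (n : nat) (A : 'M[R]_n) : 'M[R]_n :=
  xget 0 [set B | penrose A B].

Definition vint (R : realType) (n : nat) (mu : {measure set Rn R n -> \bar R})
  (f : Rn R n -> 'rV[R]_n) : 'rV[R]_n :=
  \row_(i < n) (\int[mu]_y (f y 0 i)).
Definition mxint (R : realType) (n : nat) (mu : {measure set Rn R n -> \bar R})
  (F : Rn R n -> 'M[R]_n) : 'M[R]_n :=
  \matrix_(i < n, j < n) (\int[mu]_y (F y i j)).

Definition frame_op (R : realType) (n : nat) (mu : {measure set Rn R n -> \bar R})
  : 'M[R]_n := mxint mu (fun y => (vec y)^T *m vec y).

Definition P2 (R : realType) (n : nat) (S : 'M[R]_n)
  (nu : set (Rn R n) -> \bar R) : Prop :=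
  [/\ nu setT = 1%E, nu (~` inS S) = 0%E
    & (\int[nu]_x (sqnorm (vec x))%:E < +oo)%E].

Definition pframe (R : realType) (n : nat) (W : 'M[R]_n)
  (mu : {measure set Rn R n -> \bar R}) : Prop :=
  exists A B : R, [/\ 0 < A, A <= B &
    forall x : Rn R n, inS W x ->
      ((A * sqnorm (vec x))%:E <= \int[mu]_y ((dot (vec x) (vec y)) ^+ 2)%:E)%E /\
      (\int[mu]_y ((dot (vec x) (vec y)) ^+ 2)%:E <= (B * sqnorm (vec x))%:E)%E].

(* Main.v *)
Require Import Defs.
From HB Require Import structures.
From mathcomp Require Import all_boot all_order all_algebra.
From mathcomp Require Import all_classical all_reals all_analysis.
From mathcomp Require Import measurable_realfun.
From mathcomp Require Import lra zify.
Set Implicit Arguments. Unset Strict Implicit. Unset Printing Implicit Defensive.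
Import Order.TTheory GRing.Theory Num.Theory.
Import numFieldNormedType.Exports.
Local Open Scope classical_set_scope.
Local Open Scope ring_scope.

Section LA.
Context {R : realFieldType}.

Lemma self_dot_eq0 m (v : 'rV[R]_m) : (v *m v^T) 0 0 = 0 -> v = 0.
Proof.
rewrite !mxE => /eqP; rewrite psumr_eq0; last by move=> i _; rewrite mxE -expr2 sqr_ge0.
move=> /allP H; apply/rowP => i; rewrite mxE.
have := H i (mem_index_enum _); rewrite mxE -expr2 sqrf_eq0 => /eqP.
move=> ->; done.
Qed.

Lemma row_free_gram r m (X : 'M[R]_(r, m)) : row_free X -> X *m X^T \in unitmx.
Proof.
move=> fX; rewrite -row_free_unit; apply: inj_row_free => v.
rewrite mulmxA => H.
have : (v *m X) *m (v *m X)^T = 0 by rewrite trmx_mul mulmxA H mul0mx.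
move=> /(congr1 (fun M : 'M[R]_1 => M 0 0)); rewrite [RHS]mxE => /self_dot_eq0 vX.
apply: (row_free_inj fX); by rewrite vX mul0mx.
Qed.

Definition penrose' m (A B : 'M[R]_m) : Prop :=
  [/\ A *m B *m A = A, B *m A *m B = B, (A *m B)^T = A *m B
    & (B *m A)^T = B *m A].

Lemma penrose_factor m r (C : 'M[R]_(m, r)) (F : 'M[R]_(r, m)) :
  row_free F -> row_free C^T -> exists B, penrose' (C *m F) B.
Proof.
move=> fF fC.
have u1 := row_free_gram fF.
have u2 := row_free_gram fC; rewrite trmxK in u2.
set G1 := invmx (F *m F^T) in u1 *; set G2 := invmx (C^T *m C) in u2 *.
have G1T : G1^T = G1 by rewrite /G1 trmx_inv trmx_mul trmxK.
have G2T : G2^T = G2 by rewrite /G2 trmx_inv trmx_mul trmxK.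
have e1 : forall p (X : 'M[R]_(r, p)), F *m (F^T *m (G1 *m X)) = X.
  by move=> p X; rewrite !mulmxA mulmxV // mul1mx.
have e2 : forall p (X : 'M[R]_(r, p)), G2 *m (C^T *m (C *m X)) = X.
  by move=> p X; rewrite [C^T *m _]mulmxA mulmxA mulVmx // mul1mx.
have e1' : forall p (X : 'M[R]_(r, p)), G1 *m (F *m (F^T *m X)) = X.
  by move=> p X; rewrite [F *m _]mulmxA mulmxA mulVmx // mul1mx.
have AB : (C *m F) *m (F^T *m (G1 *m (G2 *m C^T))) = C *m (G2 *m C^T).
  by rewrite -!mulmxA e1.
have BA : (F^T *m (G1 *m (G2 *m C^T))) *m (C *m F) = F^T *m (G1 *m F).
  by rewrite -!mulmxA e2.
exists (F^T *m (G1 *m (G2 *m C^T))); split.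
- by rewrite AB -!mulmxA e2.
- by rewrite BA -!mulmxA e1'.
- by rewrite AB !trmx_mul trmxK G2T -!mulmxA.
- by rewrite BA !trmx_mul trmxK G1T -!mulmxA.
Qed.

Lemma penrose_exists m (A : 'M[R]_m) : exists B, penrose' A B.
Proof.
rewrite -(mulmx_base A); apply: penrose_factor; first exact: row_base_free.
by rewrite /row_free mxrank_tr; exact: col_base_full.
Qed.
End LA.

Section Oblique.
Context {R : realFieldType} (n : nat).

Lemma orth_ker m1 m2 (U : 'M[R]_(m1, n)) (V : 'M[R]_n) (r : 'M[R]_(m2, n)) :
  (U <= V)%MS -> (r <= kermx V^T)%MS -> U *m r^T = 0.
Proof.
move=> /submxP[X ->] /sub_kermxP rV.
by rewrite -mulmxA -[V *m r^T]trmxK trmx_mul trmxK rV trmx0 mulmx0.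
Qed.

Lemma oblique_facts (W V : 'M[R]_n) :
  (W :&: kermx V^T = 0)%MS -> row_full (W + kermx V^T)%MS ->
  [/\ (V :&: kermx W^T = 0)%MS, row_full (V + kermx W^T)%MS
    & (proj_mx W (kermx V^T))^T = proj_mx V (kermx W^T)].
Proof.
set Vp := kermx V^T; set Wp := kermx W^T => dWV fWV.
have rk : \rank W = \rank V.
  have := mxrank_sum_cap W Vp; rewrite dWV mxrank0 addn0 (eqP fWV).
  rewrite /Vp mxrank_ker mxrank_tr => H.
  have := rank_leq_row V; lia.
have dVW : (V :&: Wp = 0)%MS.
  apply/eqP/rowV0P => d; rewrite sub_capmx => /andP[dV dWp].
  have : (d <= W + Vp)%MS by apply: submx_full.
  case/sub_addsmxP => -[a b] /= dE.
  have : d *m d^T = 0.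
    rewrite {2}dE linearD /= (trmx_mul a W) (trmx_mul b Vp) mulmxDr !mulmxA.
    by rewrite (sub_kermxP dWp) (orth_ker dV (submx_refl Vp)) !mul0mx addr0.
  move=> /(congr1 (fun M : 'M[R]_1 => M 0 0)); rewrite [RHS]mxE.
  exact: self_dot_eq0.
have fVW : row_full (V + Wp)%MS.
  apply/eqP; have := mxrank_sum_cap V Wp; rewrite dVW mxrank0 addn0.
  rewrite /Wp mxrank_ker mxrank_tr => ->.
  have := rank_leq_row W; lia.
split => //.
set P := proj_mx W Vp; set Q := proj_mx V Wp.
have PW : (P <= W)%MS by rewrite -[P]mul1mx proj_mx_sub.
have PWp : P *m Wp^T = 0.
  case/submxP: PW => X ->; rewrite -mulmxA.
  by rewrite -[W *m Wp^T]trmxK trmx_mul trmxK mulmx_ker trmx0 mulmx0.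
have PV : P *m V^T = V^T.
  have := add_proj_mx dWV (submx_full (1%:M : 'M[R]_n) fWV).
  rewrite !mul1mx => E.
  have E' : 1%:M - P = proj_mx Vp W by rewrite -E addrAC subrr add0r.
  have : (1%:M *m proj_mx Vp W <= Vp)%MS by apply: proj_mx_sub.
  rewrite mul1mx => /submxP[Y YE].
  apply/eqP; rewrite eq_sym -subr_eq0 -{1}[V^T]mul1mx -mulmxBl E'.
  by rewrite YE -mulmxA mulmx_ker mulmx0.
apply/row_matrixP => i; rewrite !rowE.
have : (@delta_mx R 1 n 0 i <= V + Wp)%MS by apply: submx_full.
case/sub_addsmxP => -[a b] /= ->.
rewrite !mulmxDl -(mulmxA a V) -(mulmxA a V Q) -(mulmxA b Wp) -(mulmxA b Wp Q).
rewrite (proj_mx_id dVW (submx_refl V)) (proj_mx_0 dVW (submx_refl Wp)) mulmx0 addr0.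
have -> : V *m P^T = V by rewrite -[V *m P^T]trmxK trmx_mul trmxK PV trmxK.
have -> : Wp *m P^T = 0 by rewrite -[Wp *m P^T]trmxK trmx_mul trmxK PWp trmx0.
by rewrite mulmx0 addr0.
Qed.
End Oblique.

Section MoreLA.
Context {R : realFieldType} (n : nat).

Lemma sub_from_ker (W S : 'M[R]_n) : (S <= W)%MS ->
  (forall w : 'rV[R]_n, (w <= W)%MS -> w *m S = 0 -> w = 0) -> (W <= S)%MS.
Proof.
move=> sSW H.
have D0 : (W :&: kermx S = 0)%MS.
  apply/eqP/rowV0P => v; rewrite sub_capmx => /andP[vW /sub_kermxP vS].
  exact: H.
have := mxrank_mul_ker W S; rewrite D0 mxrank0 addn0 => rWS.
have := mxrankS (submxMl W S); rewrite rWS => rWleS.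
have [_ <-] := mxrank_leqif_sup sSW.
by rewrite eqn_leq rWleS mxrankS.
Qed.

Lemma pinv_fix (S B Z : 'M[R]_n) : S^T = S ->
  [/\ S *m B *m S = S, B *m S *m B = B, (S *m B)^T = S *m B
    & (B *m S)^T = B *m S] -> (Z^T <= S)%MS -> S *m (B^T *m Z) = Z.
Proof.
move=> ST [p1 p2 p3 p4] /submxP[Y YE].
have ZE : Z = S *m Y^T by rewrite -[Z]trmxK YE trmx_mul ST.
have SBT : S *m B^T = B *m S by rewrite -p4 trmx_mul ST.
have SBTS : S *m B^T *m S = S by rewrite -{1 2}ST -trmx_mul -trmx_mul mulmxA p1 ST.
by rewrite ZE mulmxA SBT mulmxA -SBT SBTS.
Qed.
End MoreLA.

Section Meas.
Context (R : realType) (n : nat).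
Local Notation T := (Rn R n).

Lemma mcoord (i : 'I_n) : measurable_fun setT (fun x : T => vec x 0 i).
Proof.
apply: (measurability _ (measurable_realfun.RGenOpens.measurableE R)).
move=> _ [_ [a [b ->]] <-]; rewrite setTI.
apply: sub_sigma_algebra.
have : open (`]a, b[%classic : set R) by exact: interval_open.
move=> oab.
have := (proj1 (continuousP (fun x : 'rV[R]_n => x 0 i))) (@coord_continuous R 1 n 0 i) _ oab.
by [].
Qed.
End Meas.

Section L2.
Context (R : realType) (n : nat) (mu : {measure set Rn R n -> \bar R}).
Local Notation T := (Rn R n).

Definition L2 (f : T -> R) :=
  measurable_fun setT f /\ mu.-integrable setT (EFin \o (fun x => f x ^+ 2)).

Definition Int (f : T -> R) := mu.-integrable setT (EFin \o f).

Lemma L2_mul f g : L2 f -> L2 g -> Int (fun x => f x * g x).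
Proof.
move=> [mf if2] [mg ig2].
apply: (le_integrable _ _ _ (integrableD _ if2 ig2)) => //.
  by apply/measurable_EFinP; exact: measurable_funM.
move=> x _ /=; rewrite lee_fin.
rewrite (ger0_norm (addr_ge0 (sqr_ge0 _) (sqr_ge0 _))).
rewrite ler_norml; move: (f x) (g x) => a b; apply/andP; split; nra.
Qed.

Lemma L2D f g : L2 f -> L2 g -> L2 (fun x => f x + g x).
Proof.
move=> [mf if2] [mg ig2]; split; first exact: measurable_funD.
have i2 := integrableD measurableT if2 ig2.
have i22 := integrableZl measurableT 2 i2.
apply: (le_integrable _ _ _ i22) => //.
  by apply/measurable_EFinP; apply: measurable_funX; exact: measurable_funD.
move=> x _ /=; rewrite lee_fin.
rewrite (ger0_norm (sqr_ge0 _)) ger0_norm; last first.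
  by apply: mulr_ge0 => //; apply: addr_ge0; exact: sqr_ge0.
move: (f x) (g x) => a b; have := sqr_ge0 (a - b); nra.
Qed.

Lemma L2Z k f : L2 f -> L2 (fun x => k * f x).
Proof.
move=> [mf if2]; split; first by apply: measurable_funM => //; exact: measurable_cst.
have := integrableZl measurableT (k ^+ 2) if2.
apply: eq_integrable => // x _ /=; by rewrite -EFinM exprMn.
Qed.

Lemma L2_0 : L2 (fun=> 0).
Proof.
split; first exact: measurable_cst.
rewrite (_ : EFin \o _ = cst 0%E); first exact: integrable0.
by apply/funext => x /=; rewrite expr0n.
Qed.

Lemma L2_sum (I : Type) (s : seq I) (f : I -> T -> R) :
  (forall i, L2 (f i)) -> L2 (fun x => \sum_(i <- s) f i x).
Proof.
move=> H; elim: s => [|a s IH].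
  rewrite (_ : (fun x => _) = fun=> 0); first exact: L2_0.
  by apply/funext => x; rewrite big_nil.
rewrite (_ : (fun x => _) = fun x => f a x + \sum_(i <- s) f i x).
  exact: L2D.
by apply/funext => x; rewrite big_cons.
Qed.

Lemma IntD f g : Int f -> Int g -> Int (fun x => f x + g x).
Proof.
move=> If Ig; have := integrableD measurableT If Ig.
by apply: eq_integrable => // x _ /=; rewrite EFinD.
Qed.

Lemma IntZ k f : Int f -> Int (fun x => k * f x).
Proof.
move=> If; have := integrableZl measurableT k If.
by apply: eq_integrable => // x _ /=; rewrite EFinM.
Qed.

Lemma Int0 : Int (fun=> 0).
Proof.
rewrite /Int (_ : EFin \o _ = cst 0%E); first exact: integrable0.
by apply/funext => x.
Qed.

Lemma Int_sum (I : Type) (s : seq I) (f : I -> T -> R) :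
  (forall i, Int (f i)) -> Int (fun x => \sum_(i <- s) f i x).
Proof.
move=> H; elim: s => [|a s IH].
  rewrite (_ : (fun x => _) = fun=> 0); first exact: Int0.
  by apply/funext => x; rewrite big_nil.
rewrite (_ : (fun x => _) = fun x => f a x + \sum_(i <- s) f i x).
  exact: IntD.
by apply/funext => x; rewrite big_cons.
Qed.

Local Notation Rint f := (Rintegral mu setT f).

Lemma RintD f g : Int f -> Int g -> Rint (fun x => f x + g x) = Rint f + Rint g.
Proof. by move=> If Ig; rewrite RintegralD. Qed.

Lemma RintZ k f : Int f -> Rint (fun x => k * f x) = k * Rint f.
Proof. by move=> If; rewrite RintegralZl. Qed.

Lemma Rint0 : Rint (fun=> 0) = 0.
Proof. by rewrite /Rintegral integral0. Qed.

Lemma Rint_sum (I : Type) (s : seq I) (f : I -> T -> R) :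
  (forall i, Int (f i)) -> Rint (fun x => \sum_(i <- s) f i x) = \sum_(i <- s) Rint (f i).
Proof.
move=> H; elim: s => [|a s IH].
  rewrite big_nil -[RHS]Rint0; congr Rintegral; apply/funext => x; by rewrite big_nil.
rewrite big_cons -IH -RintD //; last exact: Int_sum.
by congr Rintegral; apply/funext => x; rewrite big_cons.
Qed.

Lemma sqnorm_ge0 (v : 'rV[R]_n) : 0 <= sqnorm v.
Proof. by apply: sumr_ge0 => i _; rewrite -expr2 sqr_ge0. Qed.

Lemma coord_sq_le (v : 'rV[R]_n) i : v 0 i ^+ 2 <= sqnorm v.
Proof.
rewrite /sqnorm /dot (bigD1 i) //= expr2 lerDl.
by apply: sumr_ge0 => j _; rewrite -expr2 sqr_ge0.
Qed.

Lemma msqnorm (g : T -> 'rV[R]_n) :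
  (forall i, measurable_fun setT (fun x => g x 0 i)) ->
  measurable_fun setT (fun x => sqnorm (g x)).
Proof.
move=> mg; rewrite /sqnorm /dot.
apply: measurable_sum => i; exact: measurable_funM.
Qed.

Lemma L2_of_sqnorm (g : T -> 'rV[R]_n) :
  (forall i, measurable_fun setT (fun x => g x 0 i)) ->
  (\int[mu]_x (sqnorm (g x))%:E < +oo)%E -> forall i, L2 (fun x => g x 0 i).
Proof.
move=> mg fin i; split; first exact: mg.
have Isq : mu.-integrable setT (EFin \o (fun x => sqnorm (g x))).
  apply/integrableP; split; first by apply/measurable_EFinP; exact: msqnorm.
  under eq_integral do rewrite /= (ger0_norm (sqnorm_ge0 _)).
  exact: fin.
apply: (le_integrable _ _ _ Isq) => //.
  by apply/measurable_EFinP; apply: measurable_funX.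
move=> x _ /=; rewrite lee_fin (ger0_norm (sqr_ge0 _)) (ger0_norm (sqnorm_ge0 _)).
exact: coord_sq_le.
Qed.

Lemma int_ae (A : set T) (f g : T -> R) : measurable A -> mu (~` A) = 0%E ->
  measurable_fun setT f -> measurable_fun setT g ->
  (forall x, A x -> f x = g x) ->
  (\int[mu]_x (f x)%:E = \int[mu]_x (g x)%:E)%E.
Proof.
move=> mA A0 mf mg fg.
apply: ae_eq_integral => //; try by apply/measurable_EFinP.
exists (~` A); split => //; first exact: measurableC.
move=> x /= H Ax; apply: H => _; by rewrite fg.
Qed.

Lemma Rint_ae (A : set T) (f g : T -> R) : measurable A -> mu (~` A) = 0%E ->
  measurable_fun setT f -> measurable_fun setT g ->
  (forall x, A x -> f x = g x) -> Rint f = Rint g.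
Proof. by move=> *; rewrite /Rintegral (int_ae (A:=A) (g:=g)). Qed.

Definition LV (f : T -> 'rV[R]_n) := forall i, L2 (fun x => f x 0 i).

Lemma outer_entry (u v : 'rV[R]_n) i j : (u^T *m v) i j = u 0 i * v 0 j.
Proof. by rewrite !mxE big_ord1 !mxE. Qed.

Lemma L2dot z f : LV f -> L2 (fun x => dot z (f x)).
Proof. by move=> Lf; apply: L2_sum => i; apply: L2Z. Qed.

Lemma LV_mul f (C : 'M[R]_n) : LV f -> LV (fun x => f x *m C).
Proof.
move=> Lf j.
rewrite (_ : (fun x => _) = fun x => \sum_k C k j * f x 0 k).
  by apply: L2_sum => k; apply: L2Z.
by apply/funext => x; rewrite mxE; apply: eq_bigr => k _; rewrite mulrC.
Qed.

Lemma LV_add f g : LV f -> LV g -> LV (fun x => f x + g x).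
Proof.
move=> Lf Lg j; rewrite (_ : (fun x => _) = fun x => f x 0 j + g x 0 j).
  exact: L2D.
by apply/funext => x; rewrite mxE.
Qed.

Lemma MZ f g z : LV f -> LV g ->
  z *m mxint mu (fun x => (f x)^T *m g x) = vint mu (fun x => dot z (f x) *: g x).
Proof.
move=> Lf Lg; apply/rowP => j; rewrite !mxE.
rewrite (_ : (fun x => _) = fun x => \sum_i z 0 i * (f x 0 i * g x 0 j)); last first.
  apply/funext => x; rewrite !mxE /dot mulr_suml; apply: eq_bigr => i _.
  by rewrite mulrA.
rewrite Rint_sum; last by move=> i; apply: IntZ; apply: L2_mul.
apply: eq_bigr => i _; rewrite mxE RintZ; last exact: L2_mul.
by congr (_ * Rintegral _ _ _); apply/funext => x; rewrite outer_entry.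
Qed.

Lemma MQ f g z u : LV f -> LV g ->
  (z *m mxint mu (fun x => (f x)^T *m g x) *m u^T) 0 0 =
  Rint (fun x => dot z (f x) * dot u (g x)).
Proof.
move=> Lf Lg; rewrite MZ // mxE.
have -> : Rint (fun x => dot z (f x) * dot u (g x)) =
    Rint (fun x => \sum_j u 0 j * (dot z (f x) * g x 0 j)).
  congr Rintegral; apply/funext => x; rewrite /dot mulr_sumr; apply: eq_bigr => j _.
  by rewrite mulrCA.
rewrite Rint_sum; last first.
  by move=> j; apply: IntZ; apply: L2_mul => //; exact: L2dot.
apply: eq_bigr => j _; rewrite RintZ; last by apply: L2_mul => //; exact: L2dot.
rewrite [RHS]mulrC; congr (_ * _); rewrite mxE; f_equal; apply/funext => x; by rewrite mxE.
Qed.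

Lemma MC f g (C : 'M[R]_n) : LV f -> LV g ->
  mxint mu (fun x => (f x)^T *m g x) *m C =
  mxint mu (fun x => (f x)^T *m (g x *m C)).
Proof.
move=> Lf Lg; apply/matrixP => i j; rewrite [RHS]mxE.
have -> : Rint (fun x => ((f x)^T *m (g x *m C)) i j) =
    Rint (fun x => \sum_k C k j * (f x 0 i * g x 0 k)).
  f_equal; apply/funext => x; rewrite outer_entry mxE mulr_sumr; apply: eq_bigr => k _.
  by rewrite mulrA mulrC.
rewrite Rint_sum; last by move=> k; apply: IntZ; apply: L2_mul.
rewrite mxE; apply: eq_bigr => k _; rewrite RintZ; last exact: L2_mul.
rewrite mxE mulrC; f_equal; f_equal; apply/funext => x; by rewrite outer_entry.
Qed.

Lemma MD f g1 g2 : LV f -> LV g1 -> LV g2 ->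
  mxint mu (fun x => (f x)^T *m (g1 x + g2 x)) =
  mxint mu (fun x => (f x)^T *m g1 x) + mxint mu (fun x => (f x)^T *m g2 x).
Proof.
move=> Lf L1 L2'; apply/matrixP => i j; rewrite !mxE.
rewrite (_ : (fun x => _) = fun x => f x 0 i * g1 x 0 j + f x 0 i * g2 x 0 j); last first.
  by apply/funext => x; rewrite outer_entry mxE mulrDr.
rewrite RintD; try exact: L2_mul.
by f_equal; f_equal; apply/funext => x; rewrite outer_entry.
Qed.

Lemma Mtr (f g : T -> 'rV[R]_n) :
  (mxint mu (fun x => (f x)^T *m g x))^T = mxint mu (fun x => (g x)^T *m f x).
Proof.
apply/matrixP => i j; rewrite !mxE.
by f_equal; apply/funext => x; rewrite !outer_entry mulrC.
Qed.

Lemma Mae (A : set T) f f' g g' : measurable A -> mu (~` A) = 0%E ->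
  LV f -> LV f' -> LV g -> LV g' ->
  (forall x, A x -> f x = f' x /\ g x = g' x) ->
  mxint mu (fun x => (f x)^T *m g x) = mxint mu (fun x => (f' x)^T *m g' x).
Proof.
move=> mA A0 Lf Lf' Lg Lg' H; apply/matrixP => i j; rewrite !mxE.
apply: (Rint_ae mA A0).
- by apply: (eq_measurable_fun (fun x => f x 0 i * g x 0 j)) => [x _|];
    [rewrite outer_entry | apply: measurable_funM; [case: (Lf i)|case: (Lg j)]].
- by apply: (eq_measurable_fun (fun x => f' x 0 i * g' x 0 j)) => [x _|];
    [rewrite outer_entry | apply: measurable_funM; [case: (Lf' i)|case: (Lg' j)]].
- by move=> x Ax; have [-> ->] := H x Ax.
Qed.

End L2.

Section Main.
Context (R : realType) (n : nat).
Local Notation T := (Rn R n).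

Lemma mlin (f : T -> 'rV[R]_n) (C : 'M[R]_n) :
  (forall i, measurable_fun setT (fun x => f x 0 i)) ->
  forall j, measurable_fun setT (fun x => (f x *m C) 0 j).
Proof.
move=> mf j.
apply: (eq_measurable_fun (fun x => \sum_k f x 0 k * C k j)).
  by move=> x _; rewrite mxE.
apply: measurable_sum => k; apply: measurable_funM => //; exact: measurable_cst.
Qed.

Lemma sqnorm_eq0 (v : 'rV[R]_n) : sqnorm v = 0 -> v = 0.
Proof.
move=> H; apply: self_dot_eq0; rewrite -H mxE.
by apply: eq_bigr => i _; rewrite mxE.
Qed.

Lemma minS (S : 'M[R]_n) : measurable (inS S : set T).
Proof.
have -> : inS S = (fun x : T => sqnorm (vec x *m cokermx S)) @^-1` [set 0].
  apply/seteqP; split => x /=.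
  - rewrite /inS /= submxE => /eqP ->.
    by rewrite /sqnorm /dot big1 // => i _; rewrite mxE mul0r.
  - by move=> /sqnorm_eq0 H; rewrite /inS /= submxE H.
rewrite -[_ @^-1` _]setTI.
apply: (msqnorm (g := fun x => vec x *m cokermx S)) => //.
by apply: mlin => i; exact: mcoord.
Qed.

Lemma push_moment (mu : {measure set T -> \bar R}) (S : 'M[R]_n) (h : T -> T) :
  measurable_fun setT h -> P2 S (pushforward mu h) ->
  (\int[mu]_x (sqnorm (vec (h x)))%:E < +oo)%E.
Proof.
move=> mh [_ _]; rewrite ge0_integral_pushforward //= ?preimage_setT //.
- apply/measurable_EFinP; apply: (msqnorm (g := fun x => vec x)) => i.
  exact: mcoord.
- by move=> y _; rewrite lee_fin sqnorm_ge0.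
Qed.

Lemma LVvec (mu : {measure set T -> \bar R}) (S : 'M[R]_n) :
  P2 S mu -> LV mu (fun x : T => vec x).
Proof.
move=> [_ _ mom]; apply: L2_of_sqnorm => // i; exact: mcoord.
Qed.

Lemma LVpush (mu : {measure set T -> \bar R}) (S : 'M[R]_n) (h : T -> T) :
  measurable_fun setT h -> P2 S (pushforward mu h) -> LV mu (fun x => vec (h x)).
Proof.
move=> mh P; apply: L2_of_sqnorm; last exact: push_moment P.
move=> i; exact: (measurableT_comp (mcoord i) mh).
Qed.

Lemma LV0 (mu : {measure set T -> \bar R}) : LV mu (fun=> (0 : 'rV[R]_n)).
Proof.
move=> i; rewrite (_ : (fun x => _) = fun=> 0); first exact: L2_0.
by apply/funext => x; rewrite mxE.
Qed.

Lemma M0 (mu : {measure set T -> \bar R}) (f : T -> 'rV[R]_n) :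
  mxint mu (fun x => (f x)^T *m (0 : 'rV[R]_n)) = 0.
Proof.
apply/matrixP => i j; rewrite !mxE.
transitivity (Rintegral mu setT (fun=> (0:R))); last exact: Rint0.
by f_equal; apply/funext => x; rewrite mulmx0 mxE.
Qed.

Lemma lty_of_Int (mu : {measure set T -> \bar R}) (f : T -> R) :
  (forall x, 0 <= f x) -> Int mu f -> (\int[mu]_x (f x)%:E < +oo)%E.
Proof.
move=> f0 /integrableP [_ H].
rewrite (_ : (\int[mu]_x (f x)%:E = \int[mu]_x `|(f x)%:E|)%E) //.
by apply: eq_integral => x _; rewrite /= ger0_norm.
Qed.

Lemma LV_ae (mu : {measure set T -> \bar R}) (A : set T) (f g : T -> 'rV[R]_n) :
  measurable A -> mu (~` A) = 0%E ->
  (forall i, measurable_fun setT (fun x => f x 0 i)) -> LV mu g ->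
  (forall x, A x -> f x = g x) -> LV mu f.
Proof.
move=> mA A0 mf Lg fg i; split; first exact: mf.
have [mgi Igi] := Lg i.
apply/integrableP; split.
  by apply/measurable_EFinP; apply: measurable_funX.
under eq_integral do rewrite /= (ger0_norm (sqr_ge0 _)).
rewrite (int_ae (g := fun x => g x 0 i ^+ 2) mA A0).
- by apply: lty_of_Int => // x; exact: sqr_ge0.
- exact: measurable_funX.
- exact: measurable_funX.
- by move=> x Ax; rewrite fg.
Qed.

Lemma moment_of_LV (mu : {measure set T -> \bar R}) (g : T -> 'rV[R]_n) :
  LV mu g -> (\int[mu]_x (sqnorm (g x))%:E < +oo)%E.
Proof.
move=> Lg; apply: lty_of_Int => [x|]; first exact: sqnorm_ge0.
by apply: Int_sum => i; apply: L2_mul.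
Qed.

End Main.


Unset Implicit Arguments. Set Strict Implicit. Set Printing Implicit Defensive.

Theorem proposition4p6 (R : realType) (n : nat) (W V : 'M[R]_n)
  (mu : probability (Rn R n) R)
  (HWV : mxdirect (W + orthc V)%MS) (HWVfull : row_full (W + orthc V)%MS)
  (Hmu : P2 W mu) (Hframe : pframe W mu)
  (T : Rn R n -> Rn R n) (mT : measurable_fun setT T)
  (TWV : forall x, inS W x -> inS V (T x)) :
  (P2 V (pushforward mu T) /\
   mxint mu (fun x => (vec x)^T *m vec (T x)) = oproj W V)
  <->
  (exists h : Rn R n -> Rn R n,
     [/\ measurable_fun setT h,
         (forall x, inS W x -> inS V (h x)),
         P2 V (pushforward mu h) &
         forall x, inS W x ->
           vec (T x) =
             colapp (oproj V W) (colapp (mpinv (frame_op mu)) (vec x))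
             + vec (h x)
             - vint mu (fun y =>
                 dot (colapp (mpinv (frame_op mu)) (vec x)) (vec y) *: vec (h y))]).
Proof.
have mW := minS W; have mV := minS V.
case: (Hmu) => mu1 muW0 mom.
have LX : LV mu (fun x : Rn R n => vec x) := LVvec Hmu.
have dWV : (W :&: kermx V^T = 0)%MS by apply/mxdirect_addsP; exact: HWV.
have [dVW fVW PQ] := oblique_facts dWV HWVfull.
set Q := proj_mx V (kermx W^T).
have oWV : oproj W V = Q by rewrite /oproj /orthc PQ.
have oVW : oproj V W = Q^T by [].
have colappE M v : colapp M v = v *m M^T by rewrite /colapp trmx_mul trmxK.
split.
  case=> PT MT; have LT := LVpush mT PT.
  exists T; split => // x xW.
  rewrite !colappE oVW trmxK.
  set z := vec x *m (mpinv (frame_op mu))^T.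
  by rewrite -(MZ z LX LT) MT oWV addrAC subrr add0r.
case=> h [mh hWV Ph Hform].
have LH := LVpush mh Ph.
set S := frame_op mu; set B := mpinv S.
set K := mxint mu (fun x => (vec x)^T *m vec (h x)).
set G := B^T *m (Q - K).
have TE : forall x, inS W x -> vec (T x) = vec x *m G + vec (h x).
  move=> x xW; rewrite Hform // !colappE oVW trmxK.
  by rewrite -(MZ (vec x *m B^T) LX LH) /G !mulmxBr !mulmxA addrAC.
set F := fun x : Rn R n => vec x *m G + vec (h x).
have LF : LV mu F := LV_add (LV_mul G LX) LH.
have ST : S^T = S by rewrite /S /frame_op Mtr.
have pen : penrose S B.
  apply: xgetPex; have [B' HB] := penrose_exists S; by exists B'.
have ann : forall (g : Rn R n -> 'rV[R]_n), LV mu g ->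
    mxint mu (fun x => (g x)^T *m vec x) *m cokermx W = 0.
  move=> g Lg; rewrite (MC _ Lg LX).
  rewrite (Mae (f' := g) (g' := fun=> 0) mW muW0 Lg Lg (LV_mul _ LX) (LV0 mu)) ?M0 //.
  move=> x xW; split => //; apply/eqP; rewrite -submxE; exact: xW.
have SW : (S <= W)%MS by rewrite submxE; apply/eqP; exact: ann.
have WS : (W <= S)%MS.
  apply: sub_from_ker SW _ => w wW wS0.
  case: Hframe => a [b [a0 ab Hab]].
  have [H1 _] := Hab w wW.
  have Lw := L2dot w LX.
  have Iw := L2_mul Lw Lw.
  have Q0 : Rintegral mu setT (fun x => dot w (vec x) * dot w (vec x)) = 0.
    by rewrite -(MQ w w LX LX) -/S wS0 mul0mx mxE.
  have E0 : (\int[mu]_y ((dot (vec w) (vec y)) ^+ 2)%:E = 0)%E.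
    transitivity ((Rintegral mu setT (fun x => dot w (vec x) * dot w (vec x)))%:E).
      rewrite /Rintegral fineK; last exact: integrable_fin_num.
      by apply: eq_integral => y _; rewrite expr2.
    by rewrite Q0.
  rewrite E0 lee_fin in H1.
  have sw : sqnorm w <= 0 by rewrite -(pmulr_rle0 _ a0).
  by apply: sqnorm_eq0; apply/eqP; rewrite eq_le sw sqnorm_ge0.
have KW : (K^T <= W)%MS by rewrite submxE /K Mtr; apply/eqP; exact: ann.
have QW : (Q^T <= W)%MS by rewrite /Q -PQ trmxK -[proj_mx _ _]mul1mx proj_mx_sub.
have ZS : ((Q - K)^T <= S)%MS.
  rewrite linearB /= addmx_sub ?(submx_trans QW WS) //.
  by rewrite eqmx_opp (submx_trans KW WS).
have key := pinv_fix ST pen ZS.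
have LT : LV mu (fun x => vec (T x)).
  apply: (LV_ae mW muW0 _ LF TE) => i.
  exact: (measurableT_comp (mcoord i) mT).
split.
  split.
  - by rewrite /pushforward preimage_setT.
  - rewrite /pushforward; apply: (subset_measure0 _ _ _ muW0).
    + rewrite -[X in measurable X]setTI; apply: mT => //; exact: measurableC.
    + exact: measurableC.
    + by move=> x /= nV xW; apply: nV; exact: TWV.
  - rewrite ge0_integral_pushforward //= ?preimage_setT //.
    + exact: moment_of_LV LT.
    + apply/measurable_EFinP; apply: (msqnorm (g := fun x => vec x)) => i.
      exact: mcoord.
    + by move=> y _; rewrite lee_fin sqnorm_ge0.
rewrite /= (Mae (f' := fun x => vec x) (g' := F) mW muW0 LX LX LT LF); last first.
  by move=> x xW; split => //; rewrite TE.
rewrite /F (MD LX (LV_mul G LX) LH) -(MC G LX LX) -/S -/K.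
by rewrite /G key subrK oWV.
Qed.
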